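(* Let $t$ be a term such that $t\to_h^{(b,e,m)}u$ with $u\in\mathcal{M}$ (a head-reduction sequence with exactly $b$ steps of kind (b), $e$ steps of kind (e) and $m$ steps of kind (m)). Then there exists a tight derivation $\Phi\triangleright\Gamma\vdash^{(b,e,m,|u|)}t:\mathtt{t}$ in system $\mathscr{E}$, for some context $\Gamma$ and tight type $\mathtt{t}$.
   Context: Pair pattern calculus: patterns $p,q ::= x\mid\langle p,q\rangle$ (linear); $\mathrm{var}(p)$ = variables of $p$; $p\# q$ means disjoint variables. Terms $t,u ::= x\mid\lambda p.t\mid\langle t,u\rangle\mid t\,u\mid t[p/u]$, $\mathrm{var}(p)$ bound in $t$ in $\lambda p.t$ and $t[p/u]$; $\mathrm{fv}$ as usual; terms modulo $\alpha$. List contexts $L::=\Box\mid L[p/u]$, $L\langle t\rangle$ plugging (possibly capturing), $\mathrm{bv}(L)$ variables bound by $L$; $t\{x/u\}$ capture-avoiding substitution; $\mathrm{abs}(t)$ iff $t=L\langle\lambda p.u\rangle$. Head reduction ($t\not\to_h$: no $u$ with $t\to_h u$): (b) $L\langle\lambda p.t\rangle u\to_h L\langle t[p/u]\rangle$ if $\mathrm{bv}(L)\cap\mathrm{fv}(u)=\emptyset$; (m) $t[\langle p_1,p_2\rangle/L\langle\langle u_1,u_2\rangle\rangle]\to_h L\langle t[p_1/u_1][p_2/u_2]\rangle$ if $t\not\to_h$ and $\mathrm{bv}(L)\cap\mathrm{fv}(t)=\emptyset$; (e) $t[x/u]\to_h t\{x/u\}$ if $t\not\to_h$; closure: $\lambda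 p.t\to_h\lambda p.t'$ if $t\to_h t'$; $tu\to_h t'u$ if $t\to_h t'$ and not $\mathrm{abs}(t)$; $t[p/u]\to_h t'[p/u]$ if $t\to_h t'$; $t[p/u]\to_h t[p/u']$ if $t\not\to_h$, $p$ not a variable, $u\to_h u'$. The kind of a step is the base rule (b), (e) or (m) it uses. Canonical forms $\mathcal{M} ::= \lambda p.\mathcal{M}\mid\langle t,t\rangle\mid\mathcal{M}[\langle p_1,p_2\rangle/\mathcal{N}]\mid\mathcal{N}$, $\mathcal{N} ::= x\mid\mathcal{N}\,t\mid\mathcal{N}[\langle p_1,p_2\rangle/\mathcal{N}]$, with size $|x|=0$, $|\langle t,u\rangle|=1$, $|\mathcal{N}t|=|\mathcal{N}|+1$, $|\lambda p.\mathcal{M}|=|\mathcal{M}|+1$, $|\mathcal{M}[\langle p_1,p_2\rangle/\mathcal{N}]|=|\mathcal{M}|+|\mathcal{N}|+1$. System $\mathscr{E}$. Types: tight types $\mathtt{t} ::= \bullet_{\mathcal{N}}\mid\bullet_{\mathcal{M}}$; types $\sigma ::= \mathtt{t}\mid \mathcal{A}_1\times\mathcal{A}_2\mid \mathcal{A}\to\sigma$; multi-types $\mathcal{A} ::= [\sigma_k]_{k\in K}$ (finite, possibly empty). Contexts map variables to multi-types, $\mathrm{dom}(\Gamma)$ = variables with non-empty multi-type; $\wedge$ pointwise multiset union; $\Gamma|_p$ restriction to $\mathrm{var}(p)$; $\Gamma\setminus\mathrm{var}(p)$ removal. $\mathrm{tight}(\sigma)$ iff $\sigma\in\{\bullet_{\mathcal{N}},\bullet_{\mathcal{M}}\}$,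 extended elementwise. Rules: (pat_v) $x:\mathcal{A}\Vdash^{(1,0,0)} x:\mathcal{A}$. (pat_×) from $\Gamma\Vdash^{(e_p,m_p,f_p)}p:\mathcal{A}$, $\Delta\Vdash^{(e_q,m_q,f_q)}q:\mathcal{B}$, $p\#q$ infer $\Gamma\wedge\Delta\Vdash^{(e_p+e_q,1+m_p+m_q,f_p+f_q)}\langle p,q\rangle:[\mathcal{A}\times\mathcal{B}]$. (pat_p) if $\mathrm{dom}(\Gamma)\subseteq\mathrm{var}(\langle p,q\rangle)$ and $\mathrm{tight}(\Gamma)$ then $\Gamma\Vdash^{(0,0,1)}\langle p,q\rangle:[\bullet_{\mathcal{N}}]$. (ax) $x:[\sigma]\vdash^{(0,0,0,0)}x:\sigma$. (abs) from $\Gamma\vdash^{(b,e,m,f)}t:\sigma$ and $\Gamma|_p\Vdash^{(e_p,m_p,f_p)}p:\mathcal{A}$ infer $\Gamma\setminus\mathrm{var}(p)\vdash^{(b+1,e+e_p,m+m_p,f+f_p)}\lambda p.t:\mathcal{A}\to\sigma$. (abs_p) from $\Gamma\vdash^{(b,e,m,f)}t:\mathtt{t}$ ($\mathtt{t}$ tight) and $\mathrm{tight}(\Gamma|_p)$ infer $\Gamma\setminus\mathrm{var}(p)\vdash^{(b,e,m,f+1)}\lambda p.t:\bullet_{\mathcal{M}}$. (many) from $(\Gamma_k\vdash^{(b_k,e_k,m_k,f_k)}t:\sigma_k)_{k\in K}$ infer $\wedge_k\Gamma_k\vdash^{(\sum b_k,\sum e_k,\sum m_k,\sum f_k)}t:[\sigma_k]_{k\in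 K}$. (app) from $\Gamma\vdash^{(b_t,e_t,m_t,f_t)}t:\mathcal{A}\to\sigma$, $\Delta\vdash^{(b_u,e_u,m_u,f_u)}u:\mathcal{A}$ infer $\Gamma\wedge\Delta\vdash^{(b_t+b_u,e_t+e_u,m_t+m_u,f_t+f_u)}t\,u:\sigma$. (app_p) from $\Gamma\vdash^{(b,e,m,f)}t:\bullet_{\mathcal{N}}$ infer $\Gamma\vdash^{(b,e,m,f+1)}t\,u:\bullet_{\mathcal{N}}$. (pair) from $\Gamma\vdash^{(b_t,e_t,m_t,f_t)}t:\mathcal{A}$, $\Delta\vdash^{(b_u,e_u,m_u,f_u)}u:\mathcal{B}$ infer $\Gamma\wedge\Delta\vdash^{(b_t+b_u,e_t+e_u,m_t+m_u,f_t+f_u)}\langle t,u\rangle:\mathcal{A}\times\mathcal{B}$. (pair_p) $\vdash^{(0,0,0,1)}\langle t,u\rangle:\bullet_{\mathcal{M}}$. (match) from $\Gamma\vdash^{(b_t,e_t,m_t,f_t)}t:\sigma$, $\Gamma|_p\Vdash^{(e_p,m_p,f_p)}p:\mathcal{A}$, $\Delta\vdash^{(b_u,e_u,m_u,f_u)}u:\mathcal{A}$ infer $(\Gamma\setminus\mathrm{var}(p))\wedge\Delta\vdash^{(b_t+b_u,e_t+e_u+e_p,m_t+m_u+m_p,f_t+f_u+f_p)}t[p/u]:\sigma$. A derivation is tight if its context and its type are tight. *)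

(* Defs.v *)
(* Pair pattern calculus, head reduction and system E,
   with terms represented in de Bruijn style (terms modulo alpha). *)
From Stdlib Require Import List Arith PeanoNat Permutation.
Import ListNotations.

(* A pattern binds its leaves; since
   binders are nameless, linearity and p # q hold by construction.
   Leaves are numbered left to right: in the body of a binder with
   pattern p, de Bruijn index i < nv p denotes the i-th leaf of p, and
   index i >= nv p denotes the outer variable i - nv p. *)
Inductive pat : Type :=
| PVar : pat
| PPair : pat -> pat -> pat.

Fixpoint nv (p : pat) : nat :=
  match p with PVar => 1 | PPair p q => nv p + nv q end.

(* t ::= x | \p.t | <t,u> | t u | t[p/u]   (var(p) bound in t only) *)
Inductive term : Type :=
| Var : nat -> term
| Lam : pat -> term -> term
| Pair : term -> term -> term
| App : term -> term -> term
| Sub : term -> pat -> term -> term.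

Fixpoint shift (d c : nat) (t : term) : term :=
  match t with
  | Var x => if c <=? x then Var (x + d) else Var x
  | Lam p s => Lam p (shift d (c + nv p) s)
  | Pair s u => Pair (shift d c s) (shift d c u)
  | App s u => App (shift d c s) (shift d c u)
  | Sub s p u => Sub (shift d (c + nv p) s) p (shift d c u)
  end.

(* subst c u t : capture-avoiding substitution of u for index c
   (indices above c are decremented); t{x/u} = subst 0 u t when x is the
   variable bound by a variable pattern. *)
Fixpoint subst (c : nat) (u t : term) : term :=
  match t with
  | Var x => if x <? c then Var x
             else if x =? c then shift c 0 u else Var (pred x)
  | Lam p s => Lam p (subst (c + nv p) u s)
  | Pair s s' => Pair (subst c u s) (subst c u s')
  | App s s' => App (subst c u s) (subst c u s')
  | Sub s p s' => Sub (subst (c + nv p) u s) p (subst c u s')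
  end.

Inductive lctx : Type :=
| Hole : lctx
| LSub : lctx -> pat -> term -> lctx.

Fixpoint plug (L : lctx) (t : term) : term :=
  match L with Hole => t | LSub L p u => Sub (plug L t) p u end.

Fixpoint nb (L : lctx) : nat :=
  match L with Hole => 0 | LSub L p _ => nb L + nv p end.

Definition is_abs (t : term) : Prop :=
  exists L p s, t = plug L (Lam p s).

Inductive kind : Type := Kb | Ke | Km.

(* Defined by structural
   recursion on t so that the negative premises "t not->_h" on strict
   subterms are allowed.  The side conditions bv(L) # fv(_) of the named
   presentation are realised by shifting (alpha-renaming). *)
Fixpoint hstep (t : term) : kind -> term -> Prop :=
  match t with
  | Var _ => fun _ _ => False
  | Pair _ _ => fun _ _ => False
  | Lam p s => fun k r => exists s', hstep s k s' /\ r = Lam p s'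
  | App s u => fun k r =>
      (* (b) L<\p.s0> u ->_h L<s0[p/u]> *)
      (k = Kb /\ exists L p s0,
          s = plug L (Lam p s0) /\
          r = plug L (Sub s0 p (shift (nb L) 0 u)))
      \/
      (~ is_abs s /\ exists s', hstep s k s' /\ r = App s' u)
  | Sub s p u => fun k r =>
      (* (m) s[<p1,p2>/L<<u1,u2>>] ->_h L<s[p1/u1][p2/u2]> if s not->_h *)
      (k = Km /\ (forall k' s', ~ hstep s k' s') /\
        exists p1 p2 L u1 u2,
          p = PPair p1 p2 /\ u = plug L (Pair u1 u2) /\
          r = plug L (Sub (Sub (shift (nb L) (nv p1 + nv p2) s) p1
                               (shift (nv p2) 0 u1))
                          p2 u2))
      \/
      (k = Ke /\ (forall k' s', ~ hstep s k' s') /\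
        p = PVar /\ r = subst 0 u s)
      \/
      (exists s', hstep s k s' /\ r = Sub s' p u)
      \/
      ((forall k' s', ~ hstep s k' s') /\ p <> PVar /\
        exists u', hstep u k u' /\ r = Sub s p u')
  end.

Inductive hsteps : term -> nat -> nat -> nat -> term -> Prop :=
| hs_refl t : hsteps t 0 0 0 t
| hs_b t t' b e m u : hstep t Kb t' -> hsteps t' b e m u -> hsteps t (S b) e m u
| hs_e t t' b e m u : hstep t Ke t' -> hsteps t' b e m u -> hsteps t b (S e) m u
| hs_m t t' b e m u : hstep t Km t' -> hsteps t' b e m u -> hsteps t b e (S m) u.

Inductive canM : term -> Prop :=
| cM_lam p t : canM t -> canM (Lam p t)
| cM_pair t u : canM (Pair t u)
| cM_sub t p1 p2 u : canM t -> canN u -> canM (Sub t (PPair p1 p2) u)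
| cM_N t : canN t -> canM t
with canN : term -> Prop :=
| cN_var x : canN (Var x)
| cN_app t u : canN t -> canN (App t u)
| cN_sub t p1 p2 u : canN t -> canN u -> canN (Sub t (PPair p1 p2) u).

(* |.| ; only meaningful on canonical forms *)
Fixpoint csize (t : term) : nat :=
  match t with
  | Var _ => 0
  | Pair _ _ => 1
  | App s _ => csize s + 1
  | Lam _ s => csize s + 1
  | Sub s _ u => csize s + csize u + 1
  end.

(* types; multi-types are lists taken up to (deep) permutation *)
Inductive ty : Type :=
| TN : ty
| TM : ty
| TProd : list ty -> list ty -> ty
| TArr : list ty -> ty -> ty.

Definition mtype := list ty.

Inductive tequiv : ty -> ty -> Prop :=
| te_N : tequiv TN TN
| te_M : tequiv TM TM
| te_prod A1 A2 B1 B2 : mequiv A1 B1 -> mequiv A2 B2 ->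
    tequiv (TProd A1 A2) (TProd B1 B2)
| te_arr A B s s' : mequiv A B -> tequiv s s' -> tequiv (TArr A s) (TArr B s')
with mequiv : mtype -> mtype -> Prop :=
| me_nil : mequiv [] []
| me_cons s s' A B : tequiv s s' -> mequiv A B -> mequiv (s :: A) (s' :: B)
| me_perm A B C : Permutation A B -> mequiv B C -> mequiv A C.

Definition tight (s : ty) : Prop := s = TN \/ s = TM.
Definition tightm (A : mtype) : Prop := Forall tight A.

Definition ctx := nat -> mtype.
Definition cempty : ctx := fun _ => [].
Definition cunion (G D : ctx) : ctx := fun x => G x ++ D x.
Definition csing (x : nat) (s : ty) : ctx :=
  fun y => if y =? x then [s] else [].
(* Gamma|_p : the multi-types of the nv p leaves of p, in leaf order *)
Definition crestr (G : ctx) (k : nat) : list mtype := map G (seq 0 k).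
Definition cdrop (G : ctx) (k : nat) : ctx := fun x => G (x + k).
Definition tight_ctx (G : ctx) : Prop := forall x, tightm (G x).

(* pattern typing  Gs |-^(e,m,f) p : A, Gs listing the leaves' multi-types *)
Inductive ptyped : list mtype -> pat -> mtype -> nat -> nat -> nat -> Prop :=
| pat_v A : ptyped [A] PVar A 1 0 0
| pat_x Gs Ds p q A B ep mp fp eq mq fq :
    ptyped Gs p A ep mp fp -> ptyped Ds q B eq mq fq ->
    ptyped (Gs ++ Ds) (PPair p q) [TProd A B] (ep + eq) (1 + mp + mq) (fp + fq)
| pat_p Gs p q :
    length Gs = nv (PPair p q) -> Forall tightm Gs ->
    ptyped Gs (PPair p q) [TN] 0 0 1.

Inductive typed : ctx -> term -> ty -> nat -> nat -> nat -> nat -> Prop :=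
| t_ax x s : typed (csing x s) (Var x) s 0 0 0 0
| t_abs G p t s A b e m f ep mp fp :
    typed G t s b e m f ->
    ptyped (crestr G (nv p)) p A ep mp fp ->
    typed (cdrop G (nv p)) (Lam p t) (TArr A s) (b + 1) (e + ep) (m + mp) (f + fp)
| t_abs_p G p t tt b e m f :
    typed G t tt b e m f -> tight tt ->
    Forall tightm (crestr G (nv p)) ->
    typed (cdrop G (nv p)) (Lam p t) TM b e m (f + 1)
| t_app G D t u A A' s bt et mt ft bu eu mu fu :
    typed G t (TArr A s) bt et mt ft ->
    mtyped D u A' bu eu mu fu -> mequiv A A' ->
    typed (cunion G D) (App t u) s (bt + bu) (et + eu) (mt + mu) (ft + fu)
| t_app_p G t u b e m f :
    typed G t TN b e m f -> typed G (App t u) TN b e m (f + 1)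
| t_pair G D t u A B bt et mt ft bu eu mu fu :
    mtyped G t A bt et mt ft -> mtyped D u B bu eu mu fu ->
    typed (cunion G D) (Pair t u) (TProd A B) (bt + bu) (et + eu) (mt + mu) (ft + fu)
| t_pair_p t u : typed cempty (Pair t u) TM 0 0 0 1
| t_match G D t p u s A A' bt et mt ft ep mp fp bu eu mu fu :
    typed G t s bt et mt ft ->
    ptyped (crestr G (nv p)) p A ep mp fp ->
    mtyped D u A' bu eu mu fu -> mequiv A A' ->
    typed (cunion (cdrop G (nv p)) D) (Sub t p u) s
          (bt + bu) (et + eu + ep) (mt + mu + mp) (ft + fu + fp)
with mtyped : ctx -> term -> mtype -> nat -> nat -> nat -> nat -> Prop :=
| m_nil t : mtyped cempty t [] 0 0 0 0
| m_cons G D t s A b e m f b' e' m' f' :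
    typed G t s b e m f -> mtyped D t A b' e' m' f' ->
    mtyped (cunion G D) t (s :: A) (b + b') (e + e') (m + m') (f + f').

(* Main.v *)
Require Import Defs.
From Stdlib Require Import List Arith PeanoNat Permutation Lia FunctionalExtensionality.
Import ListNotations.

Fixpoint tequiv_refl (s : ty) : tequiv s s :=
  match s with
  | TN => te_N
  | TM => te_M
  | TProd A B =>
      te_prod A B A B
        ((fix f (l : list ty) : mequiv l l :=
            match l with [] => me_nil | x :: l' => me_cons x x l' l' (tequiv_refl x) (f l') end) A)
        ((fix f (l : list ty) : mequiv l l :=
            match l with [] => me_nil | x :: l' => me_cons x x l' l' (tequiv_refl x) (f l') end) B)
  | TArr A s' =>
      te_arr A A s' s'
        ((fix f (l : list ty) : mequiv l l :=
            match l with [] => me_nil | x :: l' => me_cons x x l' l' (tequiv_refl x) (f l') end) A)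
        (tequiv_refl s')
  end.

Lemma mequiv_refl : forall l, mequiv l l.
Proof. induction l; constructor; auto using tequiv_refl. Qed.

Lemma perm_mequiv : forall A B, Permutation A B -> mequiv A B.
Proof. intros. eapply me_perm; eauto using mequiv_refl. Qed.

Lemma mequiv_char1 : forall A B, mequiv A B -> exists A', Permutation A A' /\ Forall2 tequiv A' B.
Proof.
  intros A B H; induction H.
  - exists []; auto.
  - destruct IHmequiv as (A' & P & F). exists (s :: A'); auto.
  - destruct IHmequiv as (A' & P & F). exists A'; split; auto. eapply perm_trans; eauto.
Qed.

Lemma F2_mequiv : forall A B, Forall2 tequiv A B -> mequiv A B.
Proof. intros A B H; induction H; constructor; auto. Qed.

Lemma mequiv_char2 : forall A A' B, Permutation A A' -> Forall2 tequiv A' B -> mequiv A B.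
Proof. intros. eapply me_perm; eauto using F2_mequiv. Qed.

Lemma mequiv_perm_r : forall X Y Z, mequiv X Y -> Permutation Y Z -> mequiv X Z.
Proof.
  intros X Y Z H P. apply mequiv_char1 in H as (X' & P1 & F).
  assert (F' : Forall2 (fun a b => tequiv b a) Y X').
  { clear -F. induction F; constructor; auto. }
  destruct (Permutation_Forall2 P F') as (X'' & P2 & F2).
  apply mequiv_char2 with X''. eapply perm_trans; eauto.
  clear -F2. induction F2; constructor; auto.
Qed.

Scheme tequiv_mut := Induction for tequiv Sort Prop
  with mequiv_mut := Induction for mequiv Sort Prop.

Lemma tequiv_sym : forall s s', tequiv s s' -> tequiv s' s.
Proof.
  apply (tequiv_mut (fun s s' _ => tequiv s' s) (fun A B _ => mequiv B A));
    intros; try constructor; auto.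
  eapply mequiv_perm_r; eauto. apply Permutation_sym; auto.
Qed.

Lemma mequiv_sym : forall A B, mequiv A B -> mequiv B A.
Proof.
  apply (mequiv_mut (fun s s' _ => tequiv s' s) (fun A B _ => mequiv B A));
    intros; try constructor; auto.
  eapply mequiv_perm_r; eauto. apply Permutation_sym; auto.
Qed.

Lemma tm_trans_both :
  (forall s1 s2, tequiv s1 s2 -> forall s3, tequiv s2 s3 -> tequiv s1 s3) /\
  (forall A B, mequiv A B -> forall C, mequiv B C -> mequiv A C).
Proof.
  split;
  [apply (tequiv_mut (fun s1 s2 _ => forall s3, tequiv s2 s3 -> tequiv s1 s3)
                     (fun A B _ => forall C, mequiv B C -> mequiv A C))
  |apply (mequiv_mut (fun s1 s2 _ => forall s3, tequiv s2 s3 -> tequiv s1 s3)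
                     (fun A B _ => forall C, mequiv B C -> mequiv A C))];
  intros.
  all: try (inversion H; subst; constructor; auto; fail).
  all: try (inversion H1; subst; constructor; auto; fail).
  all: try (eapply me_perm; eauto; fail).
  all: try assumption.
  all: apply mequiv_char1 in H1 as (Y & P & F);
    destruct (Permutation_Forall2 (Permutation_sym P) F) as (C' & P2 & F2);
    inversion F2 as [|a b l l' Hab Hl]; subst;
    apply mequiv_perm_r with (b :: l');
    [ constructor; [apply H; auto | apply H0; apply F2_mequiv; auto]
    | apply Permutation_sym; auto ].
Qed.


Lemma tequiv_trans : forall s1 s2 s3, tequiv s1 s2 -> tequiv s2 s3 -> tequiv s1 s3.
Proof. intros; eapply (proj1 tm_trans_both); eauto. Qed.
Lemma mequiv_trans : forall A B C, mequiv A B -> mequiv B C -> mequiv A C.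
Proof. intros; eapply (proj2 tm_trans_both); eauto. Qed.

Lemma mequiv_length : forall A B, mequiv A B -> length A = length B.
Proof. intros A B H; induction H; simpl; auto. rewrite <- IHmequiv. apply Permutation_length; auto. Qed.

Lemma tequiv_TN : forall s, tequiv s TN -> s = TN.
Proof. intros s H; inversion H; auto. Qed.
Lemma tequiv_TM : forall s, tequiv s TM -> s = TM.
Proof. intros s H; inversion H; auto. Qed.
Lemma tight_tequiv : forall s s', tequiv s s' -> tight s' -> tight s.
Proof. intros s s' H [->| ->]; [left; apply tequiv_TN|right; apply tequiv_TM]; auto. Qed.
Lemma tightm_perm : forall A B, Permutation A B -> tightm B -> tightm A.
Proof. intros. unfold tightm in *. rewrite Forall_forall in *. intros x Hx. apply H0. eapply Permutation_in; eauto. Qed.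

Lemma typed_eq : forall G t s b e m f b' e' m' f', typed G t s b e m f ->
  b = b' -> e = e' -> m = m' -> f = f' -> typed G t s b' e' m' f'.
Proof. intros; subst; auto. Qed.
Lemma typed_ctx : forall G G' t s b e m f, typed G t s b e m f -> G = G' -> typed G' t s b e m f.
Proof. intros; subst; auto. Qed.
Lemma mtyped_eq : forall G t s b e m f b' e' m' f', mtyped G t s b e m f ->
  b = b' -> e = e' -> m = m' -> f = f' -> mtyped G t s b' e' m' f'.
Proof. intros; subst; auto. Qed.

Lemma inv_Var : forall G x s b e m f, typed G (Var x) s b e m f ->
  G = csing x s /\ b = 0 /\ e = 0 /\ m = 0 /\ f = 0.
Proof. intros. inversion H; subst; auto. Qed.

Lemma inv_Lam : forall G p t s b e m f, typed G (Lam p t) s b e m f ->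
  (exists Gs A s0 b0 e0 m0 f0 ep mp fp, G = cdrop Gs (nv p) /\ s = TArr A s0 /\
     typed Gs t s0 b0 e0 m0 f0 /\ ptyped (crestr Gs (nv p)) p A ep mp fp /\
     b = b0 + 1 /\ e = e0 + ep /\ m = m0 + mp /\ f = f0 + fp) \/
  (exists Gs tt f0, G = cdrop Gs (nv p) /\ s = TM /\ typed Gs t tt b e m f0 /\ tight tt /\
     Forall tightm (crestr Gs (nv p)) /\ f = f0 + 1).
Proof. intros. inversion H; subst; [left|right]; repeat eexists; eauto. Qed.

Lemma inv_App : forall G t u s b e m f, typed G (App t u) s b e m f ->
  (exists Gt D A A' bt et mt ft bu eu mu fu, G = cunion Gt D /\
     typed Gt t (TArr A s) bt et mt ft /\ mtyped D u A' bu eu mu fu /\ mequiv A A' /\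
     b = bt + bu /\ e = et + eu /\ m = mt + mu /\ f = ft + fu) \/
  (s = TN /\ exists f0, typed G t TN b e m f0 /\ f = f0 + 1).
Proof. intros. inversion H; subst; [left|right]; repeat eexists; eauto. Qed.

Lemma inv_Pair : forall G t u s b e m f, typed G (Pair t u) s b e m f ->
  (exists Gt D A B bt et mt ft bu eu mu fu, G = cunion Gt D /\ s = TProd A B /\
     mtyped Gt t A bt et mt ft /\ mtyped D u B bu eu mu fu /\
     b = bt + bu /\ e = et + eu /\ m = mt + mu /\ f = ft + fu) \/
  (G = cempty /\ s = TM /\ b = 0 /\ e = 0 /\ m = 0 /\ f = 1).
Proof. intros. inversion H; subst; [left|right]; repeat eexists; eauto. Qed.

Lemma inv_Sub : forall G t p u s b e m f, typed G (Sub t p u) s b e m f ->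
  exists Gs D A A' bt et mt ft bu eu mu fu ep mp fp, G = cunion (cdrop Gs (nv p)) D /\
     typed Gs t s bt et mt ft /\ ptyped (crestr Gs (nv p)) p A ep mp fp /\
     mtyped D u A' bu eu mu fu /\ mequiv A A' /\
     b = bt + bu /\ e = et + eu + ep /\ m = mt + mu + mp /\ f = ft + fu + fp.
Proof. intros. inversion H; subst; repeat eexists; eauto. Qed.

Lemma inv_mnil : forall G t b e m f, mtyped G t [] b e m f ->
  G = cempty /\ b = 0 /\ e = 0 /\ m = 0 /\ f = 0.
Proof. intros. inversion H; subst; auto. Qed.

Lemma inv_mcons : forall G t s A b e m f, mtyped G t (s :: A) b e m f ->
  exists G1 D b1 e1 m1 f1 b2 e2 m2 f2, G = cunion G1 D /\ typed G1 t s b1 e1 m1 f1 /\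
    mtyped D t A b2 e2 m2 f2 /\ b = b1 + b2 /\ e = e1 + e2 /\ m = m1 + m2 /\ f = f1 + f2.
Proof. intros. inversion H; subst; repeat eexists; eauto. Qed.

Lemma mtyped_single : forall G t s b e m f, typed G t s b e m f ->
  mtyped (cunion G cempty) t [s] b e m f.
Proof. intros. eapply mtyped_eq. econstructor; eauto. constructor. all: lia. Qed.

Lemma crestr_ext : forall G G' k, (forall x, x < k -> G x = G' x) -> crestr G k = crestr G' k.
Proof. intros. unfold crestr. apply map_ext_in. intros a Ha. apply in_seq in Ha. apply H; lia. Qed.

Lemma F2_map : forall {A B} (R : B -> B -> Prop) (f g : A -> B) l,
  (forall x, In x l -> R (f x) (g x)) -> Forall2 R (map f l) (map g l).
Proof. induction l; simpl; intros; constructor; auto. Qed.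

Lemma crestr_perm : forall G G' k, (forall x, x < k -> Permutation (G x) (G' x)) ->
  Forall2 (@Permutation ty) (crestr G k) (crestr G' k).
Proof. intros. unfold crestr. apply F2_map. intros a Ha. apply in_seq in Ha. apply H; lia. Qed.

Lemma map_seq_shift : forall (G : ctx) a b s,
  map G (seq (s + a) b) = map (fun x => G (x + a)) (seq s b).
Proof. intros G a b; induction b; intros; simpl; auto. f_equal. apply (IHb (S s)). Qed.

Lemma crestr_add : forall G a b, crestr G (a + b) = crestr G a ++ crestr (cdrop G a) b.
Proof.
  intros. unfold crestr, cdrop. rewrite seq_app, map_app. f_equal. apply (map_seq_shift G a b 0).
Qed.

Lemma crestr_length : forall G k, length (crestr G k) = k.
Proof. intros. unfold crestr. rewrite length_map, length_seq. auto. Qed.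

Lemma crestr_tight : forall G k, tight_ctx G -> Forall tightm (crestr G k).
Proof. intros. unfold crestr. apply Forall_map. apply Forall_forall. intros; apply H. Qed.

Lemma ptyped_transport : forall Gs p A e m f, ptyped Gs p A e m f ->
  forall Gs', Forall2 (@Permutation ty) Gs Gs' ->
  exists A', ptyped Gs' p A' e m f /\ mequiv A A'.
Proof.
  intros Gs p A e m f H; induction H; intros Gs' F.
  - inversion F; subst. inversion H3; subst. exists y. split. constructor. apply perm_mequiv; auto.
  - apply Forall2_app_inv_l in F as (G1 & D1 & F1 & F2 & ->).
    destruct (IHptyped1 _ F1) as (A1 & P1 & E1). destruct (IHptyped2 _ F2) as (B1 & P2 & E2).
    exists [TProd A1 B1]. split. constructor; auto. constructor. constructor; auto. constructor.
  - exists [TN]. split. constructor.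
    + rewrite <- H. symmetry. eapply Forall2_length; eauto.
    + clear H. induction F; constructor; inversion H0; subst; auto.
      apply tightm_perm with x; [apply Permutation_sym; auto | auto].
    + apply mequiv_refl.
Qed.

Lemma ptyped_pair_single : forall Gs p q A e m f, ptyped Gs (PPair p q) A e m f -> exists a, A = [a].
Proof. intros. inversion H; subst; eauto. Qed.

(** * canonical forms *)
Lemma tight_csing : forall x s, tight s -> tight_ctx (csing x s).
Proof. intros x s H y. unfold csing, tightm. destruct (y =? x); auto. Qed.
Lemma tight_cempty : tight_ctx cempty.
Proof. intros y; constructor. Qed.
Lemma tight_cunion : forall G D, tight_ctx G -> tight_ctx D -> tight_ctx (cunion G D).
Proof. intros G D H1 H2 y. unfold cunion, tightm. apply Forall_app; split; [apply H1|apply H2]. Qed.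
Lemma tight_cdrop : forall G k, tight_ctx G -> tight_ctx (cdrop G k).
Proof. intros G k H y. apply H. Qed.

Scheme canM_mut := Induction for canM Sort Prop
  with canN_mut := Induction for canN Sort Prop.

Lemma canN_typed : forall u, canN u -> exists G, tight_ctx G /\ typed G u TN 0 0 0 (csize u).
Proof.
  apply (canN_mut (fun u _ => exists G tt, tight_ctx G /\ tight tt /\ typed G u tt 0 0 0 (csize u))
                  (fun u _ => exists G, tight_ctx G /\ typed G u TN 0 0 0 (csize u))); intros.
  - destruct H as (G & tt & T1 & T2 & H). exists (cdrop G (nv p)), TM. split; [apply tight_cdrop; auto|].
    split; [right; auto|]. simpl. eapply t_abs_p; eauto. apply crestr_tight; auto.
  - exists cempty, TM. split; [apply tight_cempty|]. split; [right; auto|]. apply t_pair_p.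
  - destruct H as (G & tt & T1 & T2 & H). destruct H0 as (D & T3 & H0).
    exists (cunion (cdrop G (nv (PPair p1 p2))) (cunion D cempty)), tt.
    split. apply tight_cunion. apply tight_cdrop; auto. apply tight_cunion; auto using tight_cempty.
    split; auto. simpl csize. eapply typed_eq. eapply t_match; eauto.
    apply pat_p. apply crestr_length. apply crestr_tight; auto.
    apply mtyped_single; eauto. apply mequiv_refl. all: simpl; lia.
  - destruct H as (G & T & H). exists G, TN. split; auto. split; [left; auto|auto].
  - exists (csing x TN). split. apply tight_csing; left; auto. constructor.
  - destruct H as (G & T & H). exists G. split; auto. simpl. apply t_app_p; auto.
  - destruct H as (G & T1 & H). destruct H0 as (D & T3 & H0).
    exists (cunion (cdrop G (nv (PPair p1 p2))) (cunion D cempty)).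
    split. apply tight_cunion. apply tight_cdrop; auto. apply tight_cunion; auto using tight_cempty.
    simpl csize. eapply typed_eq. eapply t_match; eauto.
    apply pat_p. apply crestr_length. apply crestr_tight; auto.
    apply mtyped_single; eauto. apply mequiv_refl. all: simpl; lia.
Qed.

Lemma canM_typed : forall u, canM u -> exists G tt, tight_ctx G /\ tight tt /\ typed G u tt 0 0 0 (csize u).
Proof.
  induction 1.
  - destruct IHcanM as (G & tt & T1 & T2 & H'). exists (cdrop G (nv p)), TM. split; [apply tight_cdrop; auto|].
    split; [right; auto|]. simpl. eapply t_abs_p; eauto. apply crestr_tight; auto.
  - exists cempty, TM. split; [apply tight_cempty|]. split; [right; auto|]. apply t_pair_p.
  - destruct IHcanM as (G & tt & T1 & T2 & H'). destruct (canN_typed _ H0) as (D & T3 & H1).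
    exists (cunion (cdrop G (nv (PPair p1 p2))) (cunion D cempty)), tt.
    split. apply tight_cunion. apply tight_cdrop; auto. apply tight_cunion; auto using tight_cempty.
    split; auto. simpl csize. eapply typed_eq. eapply t_match; eauto.
    apply pat_p. apply crestr_length. apply crestr_tight; auto.
    apply mtyped_single; eauto. apply mequiv_refl. all: simpl; lia.
  - destruct (canN_typed _ H) as (G & T & H'). exists G, TN. split; auto. split; [left; auto|auto].
Qed.

(** * shift inversion *)
Ltac natif :=
  repeat match goal with
  | |- context [if ?b then _ else _] => let E := fresh "E" in destruct b eqn:E
  end;
  repeat match goal with
  | H : (_ <? _) = true |- _ => apply Nat.ltb_lt in H
  | H : (_ <? _) = false |- _ => apply Nat.ltb_ge in H
  | H : (_ <=? _) = true |- _ => apply Nat.leb_le in H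
  | H : (_ <=? _) = false |- _ => apply Nat.leb_gt in H
  | H : (_ =? _) = true |- _ => apply Nat.eqb_eq in H
  | H : (_ =? _) = false |- _ => apply Nat.eqb_neq in H
  end.

Definition unsh (d c : nat) (G : ctx) : ctx :=
  fun x => if x <? c then G x else if x <? c + d then [] else G (x - d).

Lemma unsh_cempty : forall d c, unsh d c cempty = cempty.
Proof. intros. apply functional_extensionality; intro x. unfold unsh, cempty. natif; auto. Qed.
Lemma unsh_cunion : forall d c G D, cunion (unsh d c G) (unsh d c D) = unsh d c (cunion G D).
Proof. intros. apply functional_extensionality; intro x. unfold unsh, cunion. natif; auto. Qed.
Lemma unsh_cdrop : forall d c k G, cdrop (unsh d (c + k) G) k = unsh d c (cdrop G k).
Proof.
  intros. apply functional_extensionality; intro x. unfold unsh, cdrop. natif; auto; try lia.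
  f_equal; lia.
Qed.
Lemma unsh_crestr : forall d c k G, crestr (unsh d (c + k) G) k = crestr G k.
Proof. intros. apply crestr_ext. intros. unfold unsh. natif; auto; lia. Qed.

Definition shift_P (t : term) : Prop := forall d c G s b e m f,
  typed G (shift d c t) s b e m f -> exists G0, typed G0 t s b e m f /\ G = unsh d c G0.

Lemma shift_lift_m : forall t, shift_P t -> forall d c G A b e m f,
  mtyped G (shift d c t) A b e m f -> exists G0, mtyped G0 t A b e m f /\ G = unsh d c G0.
Proof.
  intros t HP d c G A b e m f H. remember (shift d c t) as T. induction H; subst.
  - exists cempty. split. constructor. rewrite unsh_cempty; auto.
  - destruct (HP _ _ _ _ _ _ _ _ H) as (G0 & H1 & ->).
    destruct IHmtyped as (D0 & H2 & ->); auto.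
    exists (cunion G0 D0). split. econstructor; eauto. apply unsh_cunion.
Qed.

Lemma shift_inv : forall t, shift_P t.
Proof.
  induction t; unfold shift_P; intros d c G s b e m f H; simpl in H.
  - destruct (c <=? n) eqn:E0; apply inv_Var in H as (-> & -> & -> & -> & ->);
      exists (csing n s); (split; [constructor|]);
      apply functional_extensionality; intro x; unfold unsh, csing; natif; auto; lia.
  - apply inv_Lam in H as [(Gs & A & s0 & b0 & e0 & m0 & f0 & ep & mp & fp & -> & -> & H1 & H2 & -> & -> & -> & ->)
                          |(Gs & tt & f0 & -> & -> & H1 & H2 & H3 & ->)];
    destruct (IHt _ _ _ _ _ _ _ _ H1) as (G0 & H4 & ->);
    exists (cdrop G0 (nv p)); (split; [|apply unsh_cdrop]).
    + econstructor; eauto. rewrite <- (unsh_crestr d c). auto.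
    + econstructor; eauto. rewrite <- (unsh_crestr d c). auto.
  - apply inv_Pair in H as [(Gt & D & A & B & bt & et & mt & ft & bu & eu & mu & fu & -> & -> & H1 & H2 & -> & -> & -> & ->)
                           |(-> & -> & -> & -> & -> & ->)].
    + destruct (shift_lift_m _ IHt1 _ _ _ _ _ _ _ _ H1) as (G1 & H3 & ->).
      destruct (shift_lift_m _ IHt2 _ _ _ _ _ _ _ _ H2) as (G2 & H4 & ->).
      exists (cunion G1 G2). split. econstructor; eauto. apply unsh_cunion.
    + exists cempty. split. constructor. rewrite unsh_cempty; auto.
  - apply inv_App in H as [(Gt & D & A & A' & bt & et & mt & ft & bu & eu & mu & fu & -> & H1 & H2 & H3 & -> & -> & -> & ->)
                          |(-> & f0 & H1 & ->)].
    + destruct (IHt1 _ _ _ _ _ _ _ _ H1) as (G1 & H4 & ->).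
      destruct (shift_lift_m _ IHt2 _ _ _ _ _ _ _ _ H2) as (G2 & H5 & ->).
      exists (cunion G1 G2). split. econstructor; eauto. apply unsh_cunion.
    + destruct (IHt1 _ _ _ _ _ _ _ _ H1) as (G1 & H4 & ->).
      exists G1. split; auto. constructor; auto.
  - apply inv_Sub in H as (Gs & D & A & A' & bt & et & mt & ft & bu & eu & mu & fu & ep & mp & fp &
                           -> & H1 & H2 & H3 & H4 & -> & -> & -> & ->).
    destruct (IHt1 _ _ _ _ _ _ _ _ H1) as (G1 & H5 & ->).
    destruct (shift_lift_m _ IHt2 _ _ _ _ _ _ _ _ H3) as (G2 & H6 & ->).
    exists (cunion (cdrop G1 (nv p)) G2). split.
    + econstructor; eauto. rewrite <- (unsh_crestr d c). auto.
    + rewrite unsh_cdrop. apply unsh_cunion.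
Qed.

Lemma shift_inv_m : forall t d c G A b e m f,
  mtyped G (shift d c t) A b e m f -> exists G0, mtyped G0 t A b e m f /\ G = unsh d c G0.
Proof. intros. eapply shift_lift_m; eauto. apply shift_inv. Qed.

(** * anti-substitution *)
Definition ASR (c : nat) (G G1 D : ctx) : Prop :=
  (forall x, x < c -> G x = G1 x) /\
  (forall x, c <= x -> Permutation (G x) (G1 (S x) ++ D (x - c))).

Lemma perm_4 : forall (a a1 a2 b b1 b2 : list ty), Permutation a (a1 ++ a2) -> Permutation b (b1 ++ b2) ->
  Permutation (a ++ b) ((a1 ++ b1) ++ (a2 ++ b2)).
Proof.
  intros. eapply perm_trans. apply Permutation_app; eauto.
  rewrite <- !app_assoc. apply Permutation_app_head. apply Permutation_app_swap_app.
Qed.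

Lemma ASR_union : forall c Ga G1a Da Gb G1b Db, ASR c Ga G1a Da -> ASR c Gb G1b Db ->
  ASR c (cunion Ga Gb) (cunion G1a G1b) (cunion Da Db).
Proof.
  intros c Ga G1a Da Gb G1b Db [A1 A2] [B1 B2]. split; intros; unfold cunion.
  - rewrite A1, B1; auto.
  - apply perm_4; auto.
Qed.

Lemma ASR_drop : forall c k Gs G1s Ds, ASR (c + k) Gs G1s Ds ->
  ASR c (cdrop Gs k) (cdrop G1s k) Ds.
Proof.
  intros c k Gs G1s Ds [A1 A2]. split; intros; unfold cdrop.
  - apply A1; lia.
  - replace (S x + k) with (S (x + k)) by lia. replace (x - c) with (x + k - (c + k)) by lia.
    apply A2; lia.
Qed.

Lemma ASR_empty : forall c, ASR c cempty cempty cempty.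
Proof. split; intros; unfold cempty; simpl; auto. Qed.

Lemma mtyped_concat : forall D1 u A1 b1 e1 m1 f1, mtyped D1 u A1 b1 e1 m1 f1 ->
  forall D2 A2 b2 e2 m2 f2, mtyped D2 u A2 b2 e2 m2 f2 ->
  mtyped (cunion D1 D2) u (A1 ++ A2) (b1 + b2) (e1 + e2) (m1 + m2) (f1 + f2).
Proof.
  intros D1 u A1 b1 e1 m1 f1 H; induction H; intros; simpl.
  - replace (cunion cempty D2) with D2. auto.
    apply functional_extensionality; intro; reflexivity.
  - replace (cunion (cunion G D) D2) with (cunion G (cunion D D2)).
    eapply mtyped_eq. econstructor; eauto. all: try lia.
    apply functional_extensionality; intro; unfold cunion; apply app_assoc.
Qed.

Definition asub_P (u t : term) : Prop := forall c G s b e m f,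
  typed G (subst c u t) s b e m f ->
  exists G1 D b1 e1 m1 f1 b2 e2 m2 f2, typed G1 t s b1 e1 m1 f1 /\
    mtyped D u (G1 c) b2 e2 m2 f2 /\ ASR c G G1 D /\
    b = b1 + b2 /\ e = e1 + e2 /\ m = m1 + m2 /\ f = f1 + f2.

Lemma asub_lift_m : forall u t, asub_P u t -> forall c G A b e m f,
  mtyped G (subst c u t) A b e m f ->
  exists G1 D b1 e1 m1 f1 b2 e2 m2 f2, mtyped G1 t A b1 e1 m1 f1 /\
    mtyped D u (G1 c) b2 e2 m2 f2 /\ ASR c G G1 D /\
    b = b1 + b2 /\ e = e1 + e2 /\ m = m1 + m2 /\ f = f1 + f2.
Proof.
  intros u t HP c G A b e m f H. remember (subst c u t) as T. induction H; subst.
  - exists cempty, cempty. do 8 exists 0. split. constructor. split. constructor.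
    split. apply ASR_empty. lia.
  - destruct (HP _ _ _ _ _ _ _ H) as (G1 & D1 & b1 & e1 & m1 & f1 & b2 & e2 & m2 & f2 & H1 & H2 & H3 & -> & -> & -> & ->).
    destruct IHmtyped as (G1' & D1' & b1' & e1' & m1' & f1' & b2' & e2' & m2' & f2' & H1' & H2' & H3' & -> & -> & -> & ->); auto.
    exists (cunion G1 G1'), (cunion D1 D1'). do 8 eexists. split. econstructor; eauto.
    split. apply (mtyped_concat _ _ _ _ _ _ _ H2 _ _ _ _ _ _ H2').
    split. apply ASR_union; auto. repeat split; lia.
Qed.

Lemma asub : forall u t, asub_P u t.
Proof.
  intros u. induction t; unfold asub_P; intros c G s b e m f H; simpl in H.
  - destruct (n <? c) eqn:E1; [|destruct (n =? c) eqn:E2].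
    + apply Nat.ltb_lt in E1. apply inv_Var in H as (-> & -> & -> & -> & ->).
      exists (csing n s), cempty. do 8 exists 0. split. constructor.
      split. replace (csing n s c) with (@nil ty). constructor. unfold csing; natif; auto; lia.
      split. split; intros; auto. unfold csing, cempty; natif; simpl; auto; lia. lia.
    + apply Nat.eqb_eq in E2; subst n.
      destruct (shift_inv _ _ _ _ _ _ _ _ _ H) as (G0 & H1 & ->).
      exists (csing c s), (cunion G0 cempty). do 4 exists 0. do 4 eexists. split. constructor.
      split. replace (csing c s c) with [s]. apply mtyped_single; eauto. unfold csing; natif; auto; lia.
      split. split; intros; unfold unsh, csing, cunion; natif; simpl; rewrite ?app_nil_r; auto; try lia.
      repeat split; lia.
    + apply Nat.ltb_ge in E1. apply Nat.eqb_neq in E2.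
      apply inv_Var in H as (-> & -> & -> & -> & ->).
      exists (csing n s), cempty. do 8 exists 0. split. constructor.
      split. replace (csing n s c) with (@nil ty). constructor. unfold csing; natif; auto; lia.
      split. split; intros; unfold csing, cempty; natif; simpl; auto; lia. lia.
  - apply inv_Lam in H as [(Gs & A & s0 & b0 & e0 & m0 & f0 & ep & mp & fp & -> & -> & H1 & H2 & -> & -> & -> & ->)
                          |(Gs & tt & f0 & -> & -> & H1 & H2 & H3 & ->)];
    destruct (IHt _ _ _ _ _ _ _ H1) as (G1 & D & b1 & e1 & m1 & f1 & b2 & e2 & m2 & f2 & H4 & H5 & H6 & -> & -> & -> & ->);
    assert (Ecr : crestr Gs (nv p) = crestr G1 (nv p))
      by (apply crestr_ext; intros; apply (proj1 H6); lia);
    exists (cdrop G1 (nv p)), D; do 8 eexists.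
    + split. econstructor; eauto. rewrite <- Ecr; eauto.
      split. exact H5. split. apply ASR_drop; auto. repeat split; lia.
    + split. econstructor; eauto. rewrite <- Ecr; eauto.
      split. exact H5. split. apply ASR_drop; auto. repeat split; lia.
  - apply inv_Pair in H as [(Gt & D & A & B & bt & et & mt & ft & bu & eu & mu & fu & -> & -> & H1 & H2 & -> & -> & -> & ->)
                           |(-> & -> & -> & -> & -> & ->)].
    + destruct (asub_lift_m _ _ IHt1 _ _ _ _ _ _ _ H1) as (G1 & D1 & b1 & e1 & m1 & f1 & b2 & e2 & m2 & f2 & H3 & H4 & H5 & -> & -> & -> & ->).
      destruct (asub_lift_m _ _ IHt2 _ _ _ _ _ _ _ H2) as (G1' & D1' & b1' & e1' & m1' & f1' & b2' & e2' & m2' & f2' & H3' & H4' & H5' & -> & -> & -> & ->).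
      exists (cunion G1 G1'), (cunion D1 D1'). do 8 eexists. split. econstructor; eauto.
      split. apply (mtyped_concat _ _ _ _ _ _ _ H4 _ _ _ _ _ _ H4').
      split. apply ASR_union; auto. repeat split; lia.
    + exists cempty, cempty. do 4 eexists. do 4 exists 0. split. constructor. split. constructor.
      split. apply ASR_empty. repeat split; lia.
  - apply inv_App in H as [(Gt & D & A & A' & bt & et & mt & ft & bu & eu & mu & fu & -> & H1 & H2 & H3 & -> & -> & -> & ->)
                          |(-> & f0 & H1 & ->)].
    + destruct (IHt1 _ _ _ _ _ _ _ H1) as (G1 & D1 & b1 & e1 & m1 & f1 & b2 & e2 & m2 & f2 & H4 & H5 & H6 & -> & -> & -> & ->).
      destruct (asub_lift_m _ _ IHt2 _ _ _ _ _ _ _ H2) as (G1' & D1' & b1' & e1' & m1' & f1' & b2' & e2' & m2' & f2' & H4' & H5' & H6' & -> & -> & -> & ->).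
      exists (cunion G1 G1'), (cunion D1 D1'). do 8 eexists. split. econstructor; eauto.
      split. apply (mtyped_concat _ _ _ _ _ _ _ H5 _ _ _ _ _ _ H5').
      split. apply ASR_union; auto. repeat split; lia.
    + destruct (IHt1 _ _ _ _ _ _ _ H1) as (G1 & D1 & b1 & e1 & m1 & f1 & b2 & e2 & m2 & f2 & H4 & H5 & H6 & -> & -> & -> & ->).
      exists G1, D1. do 8 eexists. split. apply t_app_p; eauto. split. eauto. split. auto. repeat split; lia.
  - apply inv_Sub in H as (Gs & Dm & A & A' & bt & et & mt & ft & bu & eu & mu & fu & ep & mp & fp &
                           -> & H1 & H2 & H3 & H4 & -> & -> & -> & ->).
    destruct (IHt1 _ _ _ _ _ _ _ H1) as (G1 & D1 & b1 & e1 & m1 & f1 & b2 & e2 & m2 & f2 & H5 & H6 & H7 & -> & -> & -> & ->).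
    destruct (asub_lift_m _ _ IHt2 _ _ _ _ _ _ _ H3) as (G1' & D1' & b1' & e1' & m1' & f1' & b2' & e2' & m2' & f2' & H5' & H6' & H7' & -> & -> & -> & ->).
    assert (Ecr : crestr Gs (nv p) = crestr G1 (nv p))
      by (apply crestr_ext; intros; apply (proj1 H7); lia).
    exists (cunion (cdrop G1 (nv p)) G1'), (cunion D1 D1'). do 8 eexists.
    split. econstructor; eauto. rewrite <- Ecr; eauto.
    split. apply (mtyped_concat _ _ _ _ _ _ _ H6 _ _ _ _ _ _ H6').
    split. apply ASR_union; auto. apply ASR_drop; auto. repeat split; lia.
Qed.

Fixpoint LW (L : lctx) (GX G : ctx) (b e m f : nat) : Prop :=
  match L with
  | Hole => G = GX /\ b = 0 /\ e = 0 /\ m = 0 /\ f = 0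
  | LSub L' p u => exists G1 b1 e1 m1 f1 A A' ep mp fp D bu eu mu fu,
      LW L' GX G1 b1 e1 m1 f1 /\ ptyped (crestr G1 (nv p)) p A ep mp fp /\
      mtyped D u A' bu eu mu fu /\ mequiv A A' /\ G = cunion (cdrop G1 (nv p)) D /\
      b = b1 + bu /\ e = e1 + eu + ep /\ m = m1 + mu + mp /\ f = f1 + fu + fp
  end.

Lemma LW_inv : forall L G X s b e m f, typed G (plug L X) s b e m f ->
  exists GX bX eX mX fX bL eL mL fL, typed GX X s bX eX mX fX /\ LW L GX G bL eL mL fL /\
    b = bX + bL /\ e = eX + eL /\ m = mX + mL /\ f = fX + fL.
Proof.
  induction L; intros G X s b e m f H; simpl in H.
  - exists G, b, e, m, f, 0, 0, 0, 0. simpl. repeat split; auto; lia.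
  - apply inv_Sub in H as (Gs & D & A & A' & bt & et & mt & ft & bu & eu & mu & fu & ep & mp & fp &
                           -> & H1 & H2 & H3 & H4 & -> & -> & -> & ->).
    destruct (IHL _ _ _ _ _ _ _ H1) as (GX & bX & eX & mX & fX & bL & eL & mL & fL & H5 & H6 & -> & -> & -> & ->).
    exists GX, bX, eX, mX, fX. do 4 eexists. split; eauto. split.
    simpl. do 15 eexists. repeat split; eauto. repeat split; lia.
Qed.

Lemma LW_build : forall L GX G bL eL mL fL, LW L GX G bL eL mL fL ->
  forall X s bX eX mX fX, typed GX X s bX eX mX fX ->
  typed G (plug L X) s (bX + bL) (eX + eL) (mX + mL) (fX + fL).
Proof.
  induction L; intros GX G bL eL mL fL H X s bX eX mX fX HX; simpl in *.
  - destruct H as (-> & -> & -> & -> & ->). eapply typed_eq; eauto; lia.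
  - destruct H as (G1 & b1 & e1 & m1 & f1 & A & A' & ep & mp & fp & D & bu & eu & mu & fu &
                   H1 & H2 & H3 & H4 & -> & -> & -> & -> & ->).
    eapply typed_eq. econstructor; eauto. all: lia.
Qed.

Lemma LW_transport : forall L GX G bL eL mL fL, LW L GX G bL eL mL fL ->
  forall GX2, (forall x, x < nb L -> GX2 x = GX x) ->
  exists G2 R, LW L GX2 G2 bL eL mL fL /\
    forall x, G x = GX (x + nb L) ++ R x /\ G2 x = GX2 (x + nb L) ++ R x.
Proof.
  induction L; intros GX G bL eL mL fL H GX2 HX; simpl in *.
  - destruct H as (-> & -> & -> & -> & ->). exists GX2, (fun _ => []).
    repeat split; auto; intros; rewrite app_nil_r, Nat.add_0_r; auto.
  - destruct H as (G1 & b1 & e1 & m1 & f1 & A & A' & ep & mp & fp & D & bu & eu & mu & fu &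
                   H1 & H2 & H3 & H4 & -> & -> & -> & -> & ->).
    destruct (IHL _ _ _ _ _ _ H1 GX2) as (G1' & R & H5 & H6). intros; apply HX; lia.
    assert (Ecr : crestr G1' (nv p) = crestr G1 (nv p)).
    { apply crestr_ext. intros x Hx. destruct (H6 x) as (-> & ->). rewrite HX; auto; lia. }
    exists (cunion (cdrop G1' (nv p)) D), (fun x => R (x + nv p) ++ D x). split.
    + do 15 eexists. repeat split; eauto. rewrite Ecr; eauto.
    + intros x. unfold cunion, cdrop. destruct (H6 (x + nv p)) as (-> & ->).
      replace (x + nv p + nb L) with (x + (nb L + nv p)) by lia.
      rewrite <- !app_assoc. auto.
Qed.

(** * subject expansion *)
Definition kb (k : kind) := match k with Kb => 1 | _ => 0 end.
Definition ke (k : kind) := match k with Ke => 1 | _ => 0 end.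
Definition km (k : kind) := match k with Km => 1 | _ => 0 end.

Lemma F2perm_tight : forall l l', Forall2 (@Permutation ty) l l' -> Forall tightm l' -> Forall tightm l.
Proof.
  intros l l' F; induction F; intros T; constructor; inversion T; subst; auto.
  apply tightm_perm with y; auto.
Qed.

Lemma crestr_perm_sym : forall G G' k, (forall x, Permutation (G x) (G' x)) ->
  Forall2 (@Permutation ty) (crestr G' k) (crestr G k).
Proof. intros. apply crestr_perm. intros. apply Permutation_sym; auto. Qed.

Lemma tequiv_arr_inv : forall s A s0, tequiv s (TArr A s0) ->
  exists B s1, s = TArr B s1 /\ mequiv B A /\ tequiv s1 s0.
Proof. intros. inversion H; subst; eauto. Qed.

Definition SE_P (t : term) : Prop := forall k t', hstep t k t' ->
  forall G' s' b e m f, typed G' t' s' b e m f ->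
  exists G s, (forall x, Permutation (G x) (G' x)) /\ tequiv s s' /\
    typed G t s (b + kb k) (e + ke k) (m + km k) f.

Lemma SE : forall t, SE_P t.
Proof.
  induction t; unfold SE_P; intros k t' Hs G' s' b e m f H; simpl in Hs.
  - contradiction.
  -
    destruct Hs as (s0' & Hs & ->).
    apply inv_Lam in H as [(Gs & A & s0 & b0 & e0 & m0 & f0 & ep & mp & fp & -> & -> & H1 & H2 & -> & -> & -> & ->)
                          |(Gs & tt & f0 & -> & -> & H1 & H2 & H3 & ->)].
    + destruct (IHt _ _ Hs _ _ _ _ _ _ H1) as (G & s1 & P & Q & H4).
      destruct (ptyped_transport _ _ _ _ _ _ H2 (crestr G (nv p))) as (A2 & H5 & H6).
      { apply crestr_perm. intros; apply Permutation_sym; auto. }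
      exists (cdrop G (nv p)), (TArr A2 s1). split. intros x; apply P.
      split. constructor; auto. apply mequiv_sym; auto.
      eapply typed_eq. econstructor; eauto. all: lia.
    + destruct (IHt _ _ Hs _ _ _ _ _ _ H1) as (G & s1 & P & Q & H4).
      exists (cdrop G (nv p)), TM. split. intros x; apply P. split. constructor.
      eapply typed_eq. eapply t_abs_p; eauto. eapply tight_tequiv; eauto.
      eapply F2perm_tight; eauto. apply crestr_perm; auto. all: lia.
  - contradiction.
  -
    destruct Hs as [(-> & L & p & s0 & -> & ->) | (_ & s'' & Hs & ->)].
    + apply LW_inv in H as (GX & bX & eX & mX & fX & bL & eL & mL & fL & H1 & H2 & -> & -> & -> & ->).
      apply inv_Sub in H1 as (G0 & Dsh & A & A' & bt & et & mt & ft & bu & eu & mu & fu & ep & mp & fp &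
                           -> & H3 & H4 & H5 & H6 & -> & -> & -> & ->).
      destruct (shift_inv_m _ _ _ _ _ _ _ _ _ H5) as (Du & H7 & ->).
      destruct (LW_transport _ _ _ _ _ _ _ H2 (cdrop G0 (nv p))) as (G2 & R & H8 & H9).
      { intros x Hx. unfold cunion, cdrop, unsh. natif; try lia. rewrite app_nil_r; auto. }
      assert (HL : typed (cdrop G0 (nv p)) (Lam p s0) (TArr A s') (bt + 1) (et + ep) (mt + mp) (ft + fp))
        by (econstructor; eauto).
      pose proof (LW_build _ _ _ _ _ _ _ H8 _ _ _ _ _ _ HL) as H10.
      exists (cunion G2 Du), s'. split.
      * intros x. unfold cunion at 1. destruct (H9 x) as (-> & ->). unfold cunion, cdrop, unsh. natif; try lia.
        replace (x + nb L - nb L) with x by lia. rewrite <- !app_assoc. apply Permutation_app_head.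
        apply Permutation_app_comm.
      * split. apply tequiv_refl. eapply typed_eq. econstructor; eauto. all: simpl; lia.
    + apply inv_App in H as [(Gt & D & A & A' & bt & et & mt & ft & bu & eu & mu & fu & -> & H1 & H2 & H3 & -> & -> & -> & ->)
                            |(-> & f0 & H1 & ->)].
      * destruct (IHt1 _ _ Hs _ _ _ _ _ _ H1) as (G & s1 & P & Q & H4).
        apply tequiv_arr_inv in Q as (B & s2 & -> & Q1 & Q2).
        exists (cunion G D), s2. split. intros x; unfold cunion; apply Permutation_app_tail; auto.
        split; auto. eapply typed_eq. econstructor; eauto. eapply mequiv_trans; eauto. all: lia.
      * destruct (IHt1 _ _ Hs _ _ _ _ _ _ H1) as (G & s1 & P & Q & H4).
        apply tequiv_TN in Q; subst. exists G, TN. split; auto. split. constructor.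
        eapply typed_eq. apply t_app_p; eauto. all: lia.
  -
    destruct Hs as [(-> & _ & p1 & p2 & L & u1 & u2 & -> & -> & ->)
                   |[(-> & _ & -> & ->)
                   |[(s'' & Hs & ->)
                   |(_ & Hp & u' & Hs & ->)]]].
    +
      apply LW_inv in H as (GX & bX & eX & mX & fX & bL & eL & mL & fL & H1 & H2 & -> & -> & -> & ->).
      apply inv_Sub in H1 as (G1 & D2 & A2 & A2' & bt & et & mt & ft & bu2 & eu2 & mu2 & fu2 & ep2 & mp2 & fp2 &
                           -> & H3 & H4 & H5 & H6 & -> & -> & -> & ->).
      apply inv_Sub in H3 as (G0 & D1 & A1 & A1' & b0 & e0 & m0 & f0 & bu1 & eu1 & mu1 & fu1 & ep1 & mp1 & fp1 &
                           -> & H7 & H8 & H9 & H10 & -> & -> & -> & ->).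
      destruct (shift_inv_m _ _ _ _ _ _ _ _ _ H9) as (D1u & H11 & ->).
      destruct (shift_inv _ _ _ _ _ _ _ _ _ H7) as (G0u & H12 & ->).
      destruct (LW_transport _ _ _ _ _ _ _ H2 (cunion D1u D2)) as (G2 & R & H13 & H14).
      { intros x Hx. unfold cunion, cdrop, unsh. natif; try lia. simpl.
        replace (x + nv p2 - nv p2) with x by lia. auto. }
      assert (HP : typed (cunion D1u D2) (Pair u1 u2) (TProd A1' A2') (bu1 + bu2) (eu1 + eu2) (mu1 + mu2) (fu1 + fu2))
        by (econstructor; eauto).
      pose proof (LW_build _ _ _ _ _ _ _ H13 _ _ _ _ _ _ HP) as H15.
      assert (HPt : ptyped (crestr G0u (nv (PPair p1 p2))) (PPair p1 p2) [TProd A1 A2]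
                     (ep1 + ep2) (1 + mp1 + mp2) (fp1 + fp2)).
      { simpl nv. rewrite crestr_add. constructor.
        - erewrite crestr_ext; eauto. intros. unfold unsh. natif; auto; lia.
        - erewrite crestr_ext; eauto. intros. unfold unsh, cunion, cdrop. natif; try lia.
          rewrite app_nil_r. auto. }
      exists (cunion (cdrop G0u (nv (PPair p1 p2))) (cunion G2 cempty)), s'. split.
      * intros x. unfold cunion at 1 2. destruct (H14 x) as (-> & ->).
        unfold cunion, cdrop, unsh, cempty. simpl nv. natif; try lia.
        replace (x + nb L + nv p2 + nv p1 - nb L) with (x + (nv p1 + nv p2)) by lia.
        replace (x + nb L + nv p2 - nv p2) with (x + nb L) by lia.
        rewrite !app_nil_r, !app_assoc. apply Permutation_refl.
      * split. apply tequiv_refl. eapply typed_eq. econstructor; eauto.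
        apply mtyped_single; eauto.
        constructor; [|constructor]. constructor; auto. all: simpl; lia.
    +
      destruct (asub _ _ _ _ _ _ _ _ _ H) as (G1 & D & b1 & e1 & m1 & f1 & b2 & e2 & m2 & f2 & H1 & H2 & H3 & -> & -> & -> & ->).
      exists (cunion (cdrop G1 (nv PVar)) D), s'. split.
      * intros x. unfold cunion, cdrop. simpl nv. rewrite Nat.add_1_r.
        apply Permutation_sym. replace x with (x - 0) at 3 by lia. apply (proj2 H3). lia.
      * split. apply tequiv_refl. eapply typed_eq. econstructor; eauto. constructor.
        apply mequiv_refl. all: simpl; lia.
    +
      apply inv_Sub in H as (Gs & D & A & A' & bt & et & mt & ft & bu & eu & mu & fu & ep & mp & fp &
                           -> & H1 & H2 & H3 & H4 & -> & -> & -> & ->).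
      destruct (IHt1 _ _ Hs _ _ _ _ _ _ H1) as (G & s1 & P & Q & H5).
      destruct (ptyped_transport _ _ _ _ _ _ H2 (crestr G (nv p))) as (A2 & H6 & H7).
      { apply crestr_perm. intros; apply Permutation_sym; auto. }
      exists (cunion (cdrop G (nv p)) D), s1. split.
      intros x; unfold cunion, cdrop; apply Permutation_app_tail; auto.
      split; auto. eapply typed_eq. econstructor; eauto.
      eapply mequiv_trans; eauto. apply mequiv_sym; auto. all: lia.
    +
      apply inv_Sub in H as (Gs & D & A & A' & bt & et & mt & ft & bu & eu & mu & fu & ep & mp & fp &
                           -> & H1 & H2 & H3 & H4 & -> & -> & -> & ->).
      destruct p as [|p1 p2]; [congruence|].
      destruct (ptyped_pair_single _ _ _ _ _ _ _ H2) as (a & ->).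
      pose proof (mequiv_length _ _ H4) as Hlen.
      destruct A' as [|a' [|]]; simpl in Hlen; try lia.
      apply inv_mcons in H3 as (G0 & D0 & b1 & e1 & m1 & f1 & b2 & e2 & m2 & f2 & -> & H5 & H6 & -> & -> & -> & ->).
      apply inv_mnil in H6 as (-> & -> & -> & -> & ->).
      destruct (IHt2 _ _ Hs _ _ _ _ _ _ H5) as (G & s1 & P & Q & H7).
      exists (cunion (cdrop Gs (nv (PPair p1 p2))) (cunion G cempty)), s'. split.
      intros x; unfold cunion, cdrop; apply Permutation_app_head; apply Permutation_app_tail; auto.
      split. apply tequiv_refl. eapply typed_eq. eapply t_match; [exact H1 | exact H2 | apply mtyped_single; exact H7 | ].
      eapply mequiv_trans; eauto. constructor; [apply tequiv_sym; auto|constructor]. all: lia.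
Qed.

Theorem theorem3 (t u : term) (b e m : nat) :
  hsteps t b e m u -> canM u ->
  exists (G : ctx) (tt : ty),
    tight_ctx G /\ tight tt /\ typed G t tt b e m (csize u).
Proof.
  intros H Hc. induction H.
  - apply canM_typed; auto.
  - destruct (IHhsteps Hc) as (G' & tt & T1 & T2 & H1).
    destruct (SE _ _ _ H _ _ _ _ _ _ H1) as (G & s & P & Q & H2).
    exists G, s. split. intros x. apply tightm_perm with (G' x); auto.
    split. eapply tight_tequiv; eauto. eapply typed_eq; eauto; simpl; lia.
  - destruct (IHhsteps Hc) as (G' & tt & T1 & T2 & H1).
    destruct (SE _ _ _ H _ _ _ _ _ _ H1) as (G & s & P & Q & H2).
    exists G, s. split. intros x. apply tightm_perm with (G' x); auto.
    split. eapply tight_tequiv; eauto. eapply typed_eq; eauto; simpl; lia.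
  - destruct (IHhsteps Hc) as (G' & tt & T1 & T2 & H1).
    destruct (SE _ _ _ H _ _ _ _ _ _ H1) as (G & s & P & Q & H2).
    exists G, s. split. intros x. apply tightm_perm with (G' x); auto.
    split. eapply tight_tequiv; eauto. eapply typed_eq; eauto; simpl; lia.
Qed.
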